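(* Let $E\subseteq\mathbb{R}$ and let $(f_n)$ be a sequence of functions $E\to\mathbb{R}$, each Abel continuous on $E$, such that $(f_n)$ converges uniformly on $E$ to a function $f:E\to\mathbb{R}$. Then $f$ is Abel continuous on $E$.
   Context: A sequence $(p_n)_{n\ge0}$ is Abel convergent to $\ell$ if $\sum_{k=0}^{\infty}p_k x^k$ converges for every $0\le x<1$ and $\lim_{x\to 1^-}(1-x)\sum_{k=0}^{\infty}p_k x^k=\ell$. A function $g:E\to\mathbb{R}$ is Abel continuous on $E$ if for every sequence $(p_n)$ in $E$ Abel convergent to some $\ell\in E$, $(g(p_n))$ is Abel convergent to $g(\ell)$. *)

(* Defs.v *)
From Stdlib Require Import Reals.
From Coquelicot Require Import Coquelicot.
Open Scope R_scope.

Definition abel_convergent (p : nat -> R) (l : R) : Prop :=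
  (forall x : R, 0 <= x < 1 -> ex_series (fun k => p k * x ^ k)) /\
  filterlim (fun x => (1 - x) * Series (fun k => p k * x ^ k))
            (at_left 1) (locally l).

Definition abel_continuous_on (E : R -> Prop) (g : R -> R) : Prop :=
  forall (p : nat -> R) (l : R),
    (forall n, E (p n)) -> E l -> abel_convergent p l ->
    abel_convergent (fun n => g (p n)) (g l).

Definition unif_conv_on (E : R -> Prop) (fn : nat -> R -> R) (f : R -> R) : Prop :=
  forall eps : R, 0 < eps ->
    exists N : nat, forall n : nat, (N <= n)%nat ->
      forall x : R, E x -> Rabs (fn n x - f x) < eps.

(* Main.v *)
Require Import Defs.
From Stdlib Require Import Reals Lra ssreflect.
From Coquelicot Require Import Coquelicot.
Open Scope R_scope.

Lemma geom_c (c x : R) : 0 <= x < 1 ->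
  is_series (fun k => c * x ^ k) (c / (1 - x)).
Proof.
  intros Hx.
  have H := is_series_geom x ltac:(rewrite Rabs_pos_eq; lra).
  have H2 := is_series_scal_l c _ _ H. exact H2.
Qed.

Lemma bnd_series (d : nat -> R) c x : (forall k, Rabs (d k) <= c) -> 0 <= x < 1 ->
  ex_series (fun k => d k * x^k) /\
  Rabs (Series (fun k => d k * x^k)) <= c / (1-x).
Proof.
  intros Hd Hx.
  have Hb : forall k, Rabs (Rabs (d k * x ^ k)) <= c * x ^ k.
  { intro k. rewrite Rabs_Rabsolu Rabs_mult -RPow_abs (Rabs_pos_eq x); [|lra].
    apply Rmult_le_compat_r; [apply pow_le; lra | apply Hd]. }
  have Heb : ex_series (fun k => c * x ^ k) by eexists; apply geom_c.
  have Hea : ex_series (fun k => Rabs (d k * x ^ k)).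
  { apply: ex_series_le Heb. exact Hb. }
  split. { by apply ex_series_Rabs. }
  eapply Rle_trans. { apply Series_Rabs, Hea. }
  rewrite -(is_series_unique _ _ (geom_c c x Hx)).
  apply Series_le; [|exact Heb].
  intro n; split; [apply Rabs_pos|]. have := Hb n. rewrite Rabs_Rabsolu. auto.
Qed.

Theorem theorem8 (E : R -> Prop) (fn : nat -> R -> R) (f : R -> R) :
  (forall n : nat, abel_continuous_on E (fn n)) ->
  unif_conv_on E fn f ->
  abel_continuous_on E f.
Proof.
  intros Hn Hu p l Hp Hl [Hex Hlim].
  have Dec : forall N e, 0 < e -> (forall x, E x -> Rabs (fn N x - f x) < e) ->
    forall x, 0 <= x < 1 ->
      ex_series (fun k => f (p k) * x ^ k) /\
      Rabs ((1 - x) * Series (fun k => f (p k) * x ^ k)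
            - (1 - x) * Series (fun k => fn N (p k) * x ^ k)) <= e.
  { intros N e He HN x Hx.
    destruct (Hn N p l Hp Hl (conj Hex Hlim)) as [Hgex _].
    destruct (bnd_series (fun k => f (p k) - fn N (p k)) e x) as [Hd1 Hd2]; auto.
    { intro k. rewrite Rabs_minus_sym. left. apply HN, Hp. }
    have Hs : ex_series (fun k => f (p k) * x ^ k).
    { apply: ex_series_ext (ex_series_plus _ _ Hd1 (Hgex x Hx)).
      intro n. rewrite /plus /=. ring. }
    split; auto.
    rewrite -Rmult_minus_distr_l -Series_minus; auto.
    rewrite (Series_ext _ (fun k => (f (p k) - fn N (p k)) * x ^ k)); last first.
    { intro; ring. }
    rewrite Rabs_mult (Rabs_pos_eq (1 - x)); [|lra].
    apply (Rmult_le_compat_l (1 - x)) in Hd2; [|lra].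
    replace ((1 - x) * (e / (1 - x))) with e in Hd2 by (field; lra). exact Hd2. }
  destruct (Hu 1 Rlt_0_1) as [N1 HN1].
  split.
  { intros x Hx. apply (Dec N1 1 Rlt_0_1 (HN1 N1 (le_n _)) x Hx). }
  apply filterlim_locally. intros eps.
  have He3 : 0 < eps / 3 by destruct eps; simpl; lra.
  destruct (Hu _ He3) as [N HN].
  have HN' := HN N (le_n _).
  destruct (Hn N p l Hp Hl (conj Hex Hlim)) as [_ Hglim].
  move: Hglim => /filterlim_locally Hglim.
  specialize (Hglim (mkposreal _ He3)).
  have Hpos : at_left 1 (fun x => 0 <= x).
  { exists (mkposreal _ Rlt_0_1). intros y Hy _.
    move: Hy. rewrite /ball /= /AbsRing_ball /abs /minus /plus /opp /=.
    intro Hy. apply Rabs_lt_between in Hy. lra. }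
  have Hlt : at_left 1 (fun x => x < 1).
  { exists (mkposreal _ Rlt_0_1). intros y _ Hy. exact Hy. }
  generalize (filter_and _ _ Hglim (filter_and _ _ Hpos Hlt)).
  apply filter_imp. intros x [Hb [H0 H1]].
  destruct (Dec N (eps/3) He3 HN' x (conj H0 H1)) as [_ Hd].
  move: Hb. rewrite /ball /= /AbsRing_ball /abs /minus /plus /opp /=. intro Hb.
  have Hl3 := HN' l Hl.
  set A := (1 - x) * Series (fun k => f (p k) * x ^ k) in Hd *.
  set B := (1 - x) * Series (fun k => fn N (p k) * x ^ k) in Hd Hb *.
  replace (A + - f l) with ((A - B) + (B + - fn N l) + (fn N l - f l)) by ring.
  eapply Rle_lt_trans. { apply Rabs_triang. }
  eapply Rle_lt_trans. { apply Rplus_le_compat_r, Rabs_triang. }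
  lra.
Qed.
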